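(* Let $\alpha,\beta,\Delta\in\mathbb{C}$. The conformal $\widetilde{\mathrm{SV}}$-module $V(\alpha,\beta,\Delta)$ is irreducible if and only if $\Delta\neq0$ or $\beta\neq0$.
   Context: A conformal module over a Lie conformal algebra $R$ is a $\mathbb{C}[\partial]$-module $V$ with $a\mapsto a_\lambda\in\mathrm{End}_{\mathbb{C}}(V)\otimes\mathbb{C}[\lambda]$ satisfying $[a_\lambda,b_\mu]=[a_\lambda b]_{\lambda+\mu}$ and $(\partial a)_\lambda=[\partial,a_\lambda]=-\lambda a_\lambda$; it is irreducible if it has no nonzero proper submodule ($\mathbb{C}[\partial]$-submodule stable under all $a_\lambda$). $\widetilde{\mathrm{SV}}$ is the Lie conformal algebra that is the free $\mathbb{C}[\partial]$-module with basis $L,M,Y,N$ whose nonzero $\lambda$-brackets (up to skew-symmetry) are $[L_\lambda L]=(\partial+2\lambda)L$, $[L_\lambda Y]=(\partial+\tfrac32\lambda)Y$, $[L_\lambda M]=(\partial+\lambda)M$, $[Y_\lambda Y]=(\partial+2\lambda)M$, $[L_\lambda N]=(\partial+\lambda)N$, $[N_\lambda M]=2M$, $[N_\lambda Y]=Y$. $V(\alpha,\beta,\Delta)=\mathbb{C}[\partial]v_\Delta$ is the free rank-one module with $L_\lambda v_\Delta=(\partial+\alpha+\Delta\lambda)v_\Delta$, $N_\lambda v_\Delta=\beta v_\Delta$, $M_\lambda v_\Delta=Y_\lambda v_\Delta=0$. *)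

(* Defs.v *)
(* The complex numbers are modelled as R[i] for an arbitrary
   R : realType (a model of the real numbers), i.e. C = R[i] is the field of
   complex numbers. *)
From mathcomp Require Import all_boot all_algebra.
From mathcomp Require Import reals.
From mathcomp.real_closed Require Import complex.

Set Implicit Arguments.
Unset Strict Implicit.
Unset Printing Implicit Defensive.
Import GRing.Theory.
Local Open Scope ring_scope.

(* The Lie conformal algebra SV~ is the free C[d]-module with basis L,M,Y,N. *)
Inductive svgen := genL | genM | genY | genN.

(* An element of SV~ :  pL(d) L + pM(d) M + pY(d) Y + pN(d) N. *)
Record sv_elt (R : realType) := SvElt {
  svL : {poly R[i]}; svM : {poly R[i]}; svY : {poly R[i]}; svN : {poly R[i]} }.

(* The module V(alpha,beta,Delta) = C[d] v_Delta is identified with {poly C}: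
   the polynomial f stands for f(d) v_Delta.  A lambda-bracket value, an
   element of V[lambda] = V (x) C[lambda], is a polynomial in lambda with
   coefficients in V, i.e. an element of {poly {poly C}}; the outer variable
   'X is lambda and the inner variable 'Y = ('X)%:P is d. *)

Definition shiftl (R : realType) (f : {poly R[i]}) : {poly {poly R[i]}} :=
  f^:P \Po ('X + 'Y).

Definition at_neg_lambda (R : realType) (p : {poly R[i]}) : {poly {poly R[i]}} :=
  p^:P \Po (- 'X).

(* Action of the generators on f(d) v_Delta, determined by
   L_lambda v = (d + alpha + Delta lambda) v, N_lambda v = beta v,
   M_lambda v = Y_lambda v = 0, and the sesquilinearity
   a_lambda (d u) = (d + lambda) a_lambda u  (from [d, a_lambda] = -lambda a_lambda),
   so that a_lambda (f(d) v) = f(d + lambda) a_lambda v. *)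
Definition gen_act (R : realType) (alpha beta Delta : R[i]) (g : svgen)
    (f : {poly R[i]}) : {poly {poly R[i]}} :=
  match g with
  | genL => shiftl f * ('Y + (alpha%:P)%:P + (Delta%:P)%:P * 'X)
  | genN => shiftl f * (beta%:P)%:P
  | genM => 0
  | genY => 0
  end.

(* Action of a general element a = sum_g p_g(d) g of SV~, using
   (p(d) g)_lambda = p(-lambda) g_lambda. *)
Definition sv_act (R : realType) (alpha beta Delta : R[i]) (a : sv_elt R)
    (f : {poly R[i]}) : {poly {poly R[i]}} :=
    at_neg_lambda (svL a) * gen_act alpha beta Delta genL f
  + at_neg_lambda (svM a) * gen_act alpha beta Delta genM f
  + at_neg_lambda (svY a) * gen_act alpha beta Delta genY f
  + at_neg_lambda (svN a) * gen_act alpha beta Delta genN f.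

(* U is a submodule of V(alpha,beta,Delta): a C[d]-submodule (C-subspace stable
   under d) such that a_lambda U is contained in U[lambda] for all a in SV~,
   i.e. every lambda-coefficient of a_lambda u lies in U. *)
Definition is_submodule (R : realType) (alpha beta Delta : R[i])
    (U : {poly R[i]} -> Prop) : Prop :=
  [/\ U 0,
      (forall u w, U u -> U w -> U (u + w)),
      (forall (c : R[i]) u, U u -> U (c *: u)),
      (forall u, U u -> U ('X * u)) &
      (forall (a : sv_elt R) u, U u ->
         forall k : nat, U ((sv_act alpha beta Delta a u)`_k))].

Definition irreducible_V (R : realType) (alpha beta Delta : R[i]) : Prop :=
  forall U : {poly R[i]} -> Prop, is_submodule alpha beta Delta U ->
    (forall u, U u -> u = 0) \/ (forall u, U u).

(* Main.v *)
Require Import Defs.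
From mathcomp Require Import all_boot all_algebra.
From mathcomp Require Import reals.
From mathcomp.real_closed Require Import complex.
From Stdlib Require Import Classical.
Local Open Scope ring_scope.
Import GRing.Theory.

Section Aux.
Variable R : realType.

Lemma lead_shiftl (u : {poly R[i]}) : lead_coef (shiftl u) = (lead_coef u)%:P.
Proof.
rewrite /shiftl lead_coef_comp; last by rewrite size_XaddC.
by rewrite lead_coefXaddC expr1n mulr1 lead_coef_map.
Qed.

Lemma lead_Lfac (alpha Delta : R[i]) : Delta != 0 ->
  lead_coef ('Y + (alpha%:P)%:P + (Delta%:P)%:P * 'X : {poly {poly R[i]}})
    = Delta%:P.
Proof.
move=> hD.
have -> : ('Y + (alpha%:P)%:P + (Delta%:P)%:P * 'X : {poly {poly R[i]}})
   = (Delta%:P)%:P * 'X + ('X + alpha%:P)%:P.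
  by rewrite rmorphD /= addrC.
have hD' : (Delta%:P)%:P != 0 :> {poly {poly R[i]}} by rewrite !polyC_eq0.
rewrite lead_coefDl; last first.
  rewrite size_mulX // size_polyC.
  by case: (_ != 0); rewrite ?size_polyC ?polyC_eq0 ?hD.
by rewrite lead_coefMX lead_coefC.
Qed.

Lemma at_neg0 : at_neg_lambda (0 : {poly R[i]}) = 0.
Proof. by rewrite /at_neg_lambda rmorph0 comp_poly0. Qed.

Lemma at_neg1 : at_neg_lambda (1 : {poly R[i]}) = 1.
Proof. by rewrite /at_neg_lambda rmorph1 comp_polyC. Qed.

Lemma sv_act_L (alpha beta Delta : R[i]) u :
  sv_act alpha beta Delta (SvElt 1 0 0 0) u = gen_act alpha beta Delta genL u.
Proof.
rewrite /sv_act [svL _]/= [svM _]/= [svY _]/= [svN _]/=.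
by rewrite at_neg1 mul1r at_neg0 !mul0r !addr0.
Qed.

Lemma sv_act_N (alpha beta Delta : R[i]) u :
  sv_act alpha beta Delta (SvElt 0 0 0 1) u = gen_act alpha beta Delta genN u.
Proof.
rewrite /sv_act [svL _]/= [svM _]/= [svY _]/= [svN _]/=.
by rewrite at_neg1 mul1r at_neg0 !mul0r !add0r.
Qed.

Lemma all_of_one (alpha beta Delta : R[i]) U :
  is_submodule alpha beta Delta U -> forall c : R[i], c != 0 -> U c%:P ->
  forall u, U u.
Proof.
case=> U0 UD UZ UX _ c hc Uc.
have U1 : U 1.
  by move: (UZ c^-1 _ Uc); rewrite scale_polyC mulVf.
elim/poly_ind => [//|p d Up].
apply: UD; first by rewrite mulrC; apply: UX.
have -> : d%:P = d *: (1 : {poly R[i]}) by rewrite -polyC1 scale_polyC mulr1.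
exact: UZ.
Qed.

End Aux.

Theorem proposition4p1 (R : realType) (alpha beta Delta : R[i]) :
  irreducible_V alpha beta Delta <-> (Delta != 0 \/ beta != 0).
Proof.
split.
- move=> hirr; apply: NNPP => hn.
  have hD : Delta = 0 by case: (eqVneq Delta 0) => // h; exfalso; apply: hn; left.
  have hB : beta = 0 by case: (eqVneq beta 0) => // h; exfalso; apply: hn; right.
  pose U := fun u : {poly R[i]} => exists q, u = q * ('X + alpha%:P).
  have hU : is_submodule alpha beta Delta U.
    split.
    + by exists 0; rewrite mul0r.
    + by move=> u w [q ->] [r ->]; exists (q + r); rewrite mulrDl.
    + by move=> c u [q ->]; exists (c *: q); rewrite scalerAl.
    + by move=> u [q ->]; exists ('X * q); rewrite mulrA.
    + move=> a u [q ->] k.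
      rewrite /sv_act /= hD hB !polyC0 !mul0r !mulr0 !addr0.
      have -> : ('Y + (alpha%:P)%:P : {poly {poly R[i]}}) = ('X + alpha%:P)%:P.
        by rewrite rmorphD.
      rewrite mulrA coefMC; by eexists.
  case: (hirr U hU) => [h0|hall].
  + have := h0 ('X + alpha%:P) (ex_intro _ 1 (esym (mul1r _))).
    by move/eqP; rewrite -size_poly_eq0 size_XaddC.
  + have [q hq] := hall 1.
    have := congr1 (fun p : {poly R[i]} => size p) hq.
    rewrite /= size_poly1.
    have [->|qn0] := eqVneq q 0; first by rewrite mul0r size_poly0.
    rewrite size_mul // ?size_XaddC; last by rewrite -size_poly_eq0 size_XaddC.
    by case: (size q) (size_poly_gt0 q) => [|n]; rewrite ?qn0 // addnC.
- move=> hDB U hU; case: (classic (exists u, U u /\ u != 0)) => [[u [Uu un0]]|hno]; last first.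
    left=> u Uu; case: (eqVneq u 0) => // h; exfalso; apply: hno; by exists u.
  right.
  have lu0 : lead_coef u != 0 by rewrite lead_coef_eq0.
  case: hU => U0 UD UZ UX Uact.
  have hU : is_submodule alpha beta Delta U by split.
  case: hDB => [hD|hB].
  + have := Uact (SvElt 1 0 0 0) u Uu (size (sv_act alpha beta Delta (SvElt 1 0 0 0) u)).-1.
    change (U (lead_coef (sv_act alpha beta Delta (SvElt 1 0 0 0) u)) -> forall u, U u).
    rewrite sv_act_L /gen_act lead_coefM lead_shiftl lead_Lfac // -polyCM => Uc.
    by apply: (@all_of_one _ _ _ _ _ hU _ _ Uc); rewrite mulf_neq0.
  + have := Uact (SvElt 0 0 0 1) u Uu (size (sv_act alpha beta Delta (SvElt 0 0 0 1) u)).-1.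
    change (U (lead_coef (sv_act alpha beta Delta (SvElt 0 0 0 1) u)) -> forall u, U u).
    rewrite sv_act_N /gen_act lead_coefM lead_shiftl !lead_coefC -polyCM => Uc.
    by apply: (@all_of_one _ _ _ _ _ hU _ _ Uc); rewrite mulf_neq0.
Qed.
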